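(* Assume that the distribution of $Z$ is aperiodic (the greatest common divisor of its support is $1$), that $\mathbb{E} Z=\infty$ and that $\mathbb{E}\min(Z,W)<\infty$. Then $\mathbb{E}[J_n]\to\infty$ as $n\to\infty$.
   Context: Let $Z,W,(Z_n)_{n\ge1},(W_n)_{n\ge1}$ be independent, identically distributed random variables taking values in $\mathbb{N}=\{1,2,3,\dots\}$. Define the shortest-edge chain $S_n=\{n\}$ for $n\le 0$ and $S_n=\{n\}\cup S_{n-\min(Z_n,W_n)}$ for $n\ge1$. For $n\ge1$ let $J_n=\sum_{m=1}^n \mathbb{1}_{\{m\in S_n\}}\mathbb{1}_{\{\max(Z_m,W_m)\ge m\}}$ (the number of vertices of $S_n$ with positive index whose longer outgoing edge reaches a non-positive integer). *)

(* Defs.v *)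
From HB Require Import structures.
From mathcomp Require Import all_boot all_order all_algebra.
From mathcomp Require Import all_classical all_reals all_analysis.
Set Implicit Arguments. Unset Strict Implicit. Unset Printing Implicit Defensive.
Import Order.TTheory GRing.Theory Num.Theory.
Local Open Scope classical_set_scope.
Local Open Scope ereal_scope.

Definition mutually_independent {d} {T : measurableType d} {R : realType}
  (P : probability T R) (I : eqType) (X : I -> T -> nat) : Prop :=
  forall (s : seq I) (A : I -> set nat), uniq s ->
    P [set t | forall i, i \in s -> A i (X i t)]
    = \prod_(i <- s) P (X i @^-1` A i).

Definition identically_distributed {d} {T : measurableType d} {R : realType}
  (P : probability T R) (I : Type) (X : I -> T -> nat) : Prop :=
  forall i j (k : nat), P (X i @^-1` [set k]) = P (X j @^-1` [set k]).

Definition aperiodic {d} {T : measurableType d} {R : realType}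
  (P : probability T R) (Y : T -> nat) : Prop :=
  forall dv : nat, (forall k : nat, 0 < P (Y @^-1` [set k]) -> (dv %| k)%N) ->
    dv = 1%N.

(* Positive part of the shortest-edge chain.  [f m] = min(Z_m, W_m).
   [chain f fuel n] lists the elements of S_n with positive index, starting
   from n >= 1: S_n = {n} ∪ S_{n - f n}; if n - f n <= 0 the rest of the chain
   consists of non-positive integers only (S_k = {k} for k <= 0). *)
Fixpoint chain (f : nat -> nat) (fuel n : nat) : seq nat :=
  match fuel with
  | 0 => [::]
  | fuel'.+1 =>
      if n == 0%N then [::]
      else n :: (if (f n < n)%N then chain f fuel' (n - f n) else [::])
  end.

(* Positive-index part of S_n for the realisation z, w of (Z_m), (W_m).
   Since min(Z_m,W_m) >= 1 the indices strictly decrease, so fuel n suffices. *)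
Definition Spos (z w : nat -> nat) (n : nat) : seq nat :=
  chain (fun m => minn (z m) (w m)) n n.

Definition Jn (z w : nat -> nat) (n : nat) : nat :=
  (\sum_(1 <= m < n.+1) ((m \in Spos z w n) && (m <= maxn (z m) (w m))))%N.

(* Main.v *)
Require Import Defs.
From HB Require Import structures.
From mathcomp Require Import all_boot all_order all_algebra.
From mathcomp Require Import all_classical all_reals all_analysis.
From mathcomp Require Import measurable_realfun zify ring lra.
Import Order.TTheory GRing.Theory Num.Theory.

Lemma chain_le f fuel n y : y \in chain f fuel n -> (y <= n)%N.
Proof.
elim: fuel n => [|fuel IH] n //=.
case: (n == 0%N) => //; rewrite in_cons => /orP[/eqP->//|].
case: ifP => // _ /IH H; exact: (leq_trans H (leq_subr _ _)).
Qed.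

Lemma chain_head f fuel n : (1 <= n <= fuel)%N -> n \in chain f fuel n.
Proof.
case: fuel => [|fuel] /andP[n1 nf] /=; first by move: (leq_trans n1 nf).
by case: eqP => [n0|_]; [rewrite n0 in n1|rewrite mem_head].
Qed.

Lemma chain_local f g fuel n m :
  (forall k, (m < k <= n)%N -> f k = g k) ->
  forall x, (m <= x)%N -> (x \in chain f fuel n) = (x \in chain g fuel n).
Proof.
elim: fuel n => [|fuel IH] n fg x mx //=.
case: (n == 0%N) => //; rewrite !in_cons.
case: (leqP n m) => nm.
  have xn : forall h, (x \in (if (h n < n)%N then chain h fuel (n - h n) else [::])) -> x = n.
    move=> h; case: ifP => // _ /chain_le H; apply/eqP; rewrite eqn_leq.
    by rewrite (leq_trans H (leq_subr _ _)) (leq_trans nm mx).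
  case: (boolP (x == n)) => //= xnn.
  by apply/idP/idP => /xn xe; rewrite xe eqxx in xnn.
have fgn : f n = g n by apply: fg; rewrite nm leqnn.
rewrite fgn; case: ifP => // _; congr (_ || _); apply: IH => // k /andP[mk kn].
apply: fg; rewrite mk /=; exact: (leq_trans kn (leq_subr _ _)).
Qed.

Lemma chain_window f fuel n lo hi : (forall k, 1 <= f k)%N -> (1 <= lo)%N ->
  (n <= fuel)%N -> (hi < n)%N ->
  (forall x, (lo <= x <= hi)%N -> x \notin chain f fuel n) ->
  exists s, (hi < s <= n)%N /\ (s < lo + f s)%N.
Proof.
move=> f1 lo1; elim: fuel n => [|fuel IH] n nf hn H; first by lia.
have n0 : (n == 0%N) = false by apply/negbTE; lia.
have Hn := H; move: H; rewrite /= n0 => H.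
case: ifP H => fn H; last by exists n; split; lia.
have := f1 n => f1n.
case: (leqP lo (n - f n)) => lon; last by exists n; split; lia.
case: (leqP (n - f n) hi) => nhi.
  have hd : n - f n \in chain f fuel (n - f n) by apply: chain_head; lia.
  have := H (n - f n); rewrite lon nhi.
  move=> /(_ isT); rewrite in_cons hd orbT; done.
have H' : forall x, (lo <= x <= hi)%N -> x \notin chain f fuel (n - f n).
  by move=> x xH; have := H x xH; rewrite in_cons negb_or => /andP[].
have nf' : (n - f n <= fuel)%N by lia.
have [s [s1 s2]] := IH (n - f n) nf' nhi H'.
by exists s; split; lia.
Qed.

Local Open Scope classical_set_scope.
Local Open Scope ereal_scope.

Section Indep.
Context {R : realType} {d : measure_display} {T : measurableType d}
  (P : probability T R) (X : bool * nat -> T -> nat)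
  (Xmeas : forall i (k : nat), measurable (X i @^-1` [set k]))
  (Xindep : mutually_independent P X).

Definition dep_on (s : seq (bool * nat)) (F : (bool * nat -> nat) -> Prop) :=
  forall g h, (forall i, i \in s -> g i = h i) -> F g -> F h.

Definition rect (r : seq (bool * nat)) (A : bool * nat -> set nat) :=
  [set t | forall i, i \in r -> A i (X i t)].

Lemma preim_meas i (A : set nat) : measurable (X i @^-1` A).
Proof.
have -> : X i @^-1` A = \bigcup_(v in A) (X i @^-1` [set v]).
  apply/seteqP; split => t /=; first by move=> At; exists (X i t).
  by case=> v Av /= ->.
by apply: bigcup_measurable => v _; exact: Xmeas.
Qed.

Lemma prod_fin (r : seq (bool * nat)) (A : bool * nat -> set nat) :
  \prod_(i <- r) P (X i @^-1` A i) \is a fin_num /\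
  0 <= \prod_(i <- r) P (X i @^-1` A i).
Proof.
elim: r => [|i r [IH1 IH2]]; first by rewrite big_nil.
rewrite big_cons; split; last by apply: mule_ge0.
rewrite fin_numM // ge0_fin_numE // (le_lt_trans (probability_le1 _ _)) ?ltry //.
exact: preim_meas.
Qed.


Lemma rect_meas r A : measurable (rect r A).
Proof.
elim: r => [|i r IH].
  by have -> : rect [::] A = setT by apply/seteqP; split.
have -> : rect (i :: r) A = X i @^-1` A i `&` rect r A.
  apply/seteqP; split => t /=.
    by move=> H; split; [apply: H; rewrite mem_head|move=> j jr; apply: H; rewrite in_cons jr orbT].
  by move=> [H1 H2] j; rewrite in_cons => /orP[/eqP->//|/H2].
by apply: measurableI => //; exact: preim_meas.
Qed.

Definition ev (F : (bool * nat -> nat) -> Prop) := [set t | F (fun i => X i t)].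

Lemma indep_key (s : seq (bool * nat)) : uniq s -> forall F, dep_on s F ->
  measurable (ev F) /\
  forall r A, uniq r -> (forall i, i \in r -> i \notin s) ->
  P (ev F `&` rect r A) = P (ev F) * \prod_(i <- r) P (X i @^-1` A i).
Proof.
elim: s => [|a s IH] /=.
  move=> _ F dF; case: (pselect (F (fun _ => 0%N))) => F0.
    have -> : ev F = setT by apply/seteqP; split => // t _; exact: dF F0.
    split => // r A ur _; rewrite setTI probability_setT mul1e; exact: Xindep.
  have -> : ev F = set0.
    by apply/seteqP; split => // t /= Ft; apply: F0; exact: dF Ft.
  by split => // r A _ _; rewrite set0I measure0 mul0e.
move=> /andP[as_ us] F dF.
pose Fv (v : nat) g := F (fun i => if i == a then v else g i).
have dFv v : dep_on s (Fv v).
  move=> g h gh; apply: dF => i; rewrite in_cons; case: eqP => // _ /= /gh //.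
have IHv v := IH us (Fv v) (dFv v).
have evE : ev F = \bigcup_v (ev (Fv v) `&` (X a @^-1` [set v])).
  apply/seteqP; split => t /=.
    move=> Ft; exists (X a t) => //; split => //=; rewrite /Fv.
    by apply: dF Ft => i _; case: eqP => // ->.
  case=> v _ [/= Fvt xv]; subst v; apply: dF Fvt => i _; by case: eqP => // ->.
have mev : measurable (ev F).
  by rewrite evE; apply: bigcupT_measurable => v; apply: measurableI;
    [exact: (IHv v).1|exact: Xmeas].
have gen : forall r A, uniq r -> (forall i, i \in r -> i \notin a :: s) ->
    P (ev F `&` rect r A) =
    \sum_(v <oo) ((P (ev (Fv v)) * P (X a @^-1` [set v])) *
                  \prod_(i <- r) P (X i @^-1` A i)).
  move=> r A ur rs.
  pose A' v := fun i => if i == a then [set v] else A i.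
  have ar : a \notin r by apply/negP => /rs; rewrite mem_head.
  have E v : ev (Fv v) `&` (X a @^-1` [set v]) `&` rect r A =
             ev (Fv v) `&` rect (a :: r) (A' v).
    rewrite -setIA; congr (_ `&` _); apply/seteqP; split => t /=.
      move=> [xv H] i; rewrite in_cons /A'; case: eqP => [-> //|ia /= ir].
      exact: H.
    move=> H; split; first by have := H a; rewrite mem_head /A' eqxx; apply.
    move=> i ir; have := H i; rewrite in_cons ir orbT /A'.
    by case: eqP => [ia|_]; [rewrite -ia ir in ar|apply].
  have mrect v : measurable (rect (a :: r) (A' v)) by exact: rect_meas.
  rewrite evE setI_bigcupl measure_semi_bigcup.
  - apply: eq_eseriesr => v _; rewrite E.
    have H1 : uniq (a :: r) by rewrite /= ar ur.
    have H2 : forall i, i \in a :: r -> i \notin s.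
      move=> i; rewrite in_cons => /orP[/eqP ->//|ir].
      by apply/negP => is_; have := rs i ir; rewrite in_cons is_ orbT.
    transitivity (P (ev (Fv v)) * \prod_(i <- a :: r) P (X i @^-1` A' v i)).
      exact: ((IHv v).2 (a :: r) (A' v) H1 H2).
    rewrite big_cons /A' eqxx muleA; congr (_ * _ * _).
      by apply: eq_big_seq => i ir; case: eqP => // ia; rewrite -ia ir in ar.
  - move=> v; rewrite E; apply: measurableI => //; exact: (IHv v).1.
  - move=> v w _ _ [t [[[_ /= xv] _] [[_ /= xw] _]]]; by rewrite -xv -xw.
  - by rewrite -setI_bigcupl -evE; apply: measurableI => //; exact: rect_meas.
split => // r A ur rs; rewrite gen //.
have := gen [::] (fun _ => setT) isT (fun i (H : i \in [::]) => ltac:(done)).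
have -> : rect [::] (fun _ => setT) = setT by apply/seteqP; split.
rewrite setIT => ->.
have [cf c0] := prod_fin r A.
set c := \prod_(i <- r) _ in cf c0 *.
rewrite -(fineK cf) big_nil.
rewrite (_ : \sum_(v <oo) (P (ev (Fv v)) * P (X a @^-1` [set v]) * 1) =
  \sum_(v <oo) (P (ev (Fv v)) * P (X a @^-1` [set v]))); last first.
  by apply: eq_eseriesr => v _; rewrite mule1.
under eq_eseriesr do rewrite muleC.
rewrite nneseriesZl; first by rewrite muleC.
by move=> v _; apply: mule_ge0.
Qed.

End Indep.

Section Exp.
Context {R : realType} {d : measure_display} {T : measurableType d}
  (P : probability T R).

Lemma fib_meas (g : T -> nat) (A : set nat) :
  (forall k, measurable (g @^-1` [set k])) -> measurable (g @^-1` A).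
Proof.
move=> gm.
have -> : g @^-1` A = \bigcup_(v in A) (g @^-1` [set v]).
  apply/seteqP; split => t /=; first by move=> At; exists (g t).
  by case=> v Av /= ->.
by apply: bigcup_measurable => v _; exact: gm.
Qed.

Lemma fib_mfun (g : T -> nat) :
  (forall k, measurable (g @^-1` [set k])) ->
  measurable_fun setT (fun t : T => (((g t)%:R : R)%:E)).
Proof.
move=> gm _ Y mY; rewrite setTI.
exact: (@fib_meas _ ([set k | Y ((k%:R)%:E)]) gm).
Qed.

Lemma nat_series (m : nat) :
  ((m%:R)%:E : \bar R) = \sum_(k <oo) ((k < m)%N%:R)%:E.
Proof.
rewrite (@nneseries_split R _ 0%N m); last by move=> k _; rewrite lee_fin.
rewrite eseries0; last by move=> k; rewrite add0n => mk _; rewrite ltnNge mk.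
rewrite adde0 add0n sumEFin; congr (_%:E).
rewrite (eq_big_nat _ _ (F2 := fun _ => 1%R)); last by move=> i /andP[_ ->].
rewrite big_const_nat subn0; elim: m => //= m <-; by rewrite mulrS.
Qed.

Lemma expect_nat (g : T -> nat) : (forall k, measurable (g @^-1` [set k])) ->
  \int[P]_t ((g t)%:R)%:E = \sum_(k <oo) P [set t | (k < g t)%N].
Proof.
move=> gm.
have mk k : measurable [set t | (k < g t)%N].
  exact: (@fib_meas _ ([set v | (k < v)%N]) gm).
transitivity (\int[P]_t (\sum_(k <oo) (\1_[set t | (k < g t)%N] t)%:E)).
  apply: eq_integral => t _; rewrite nat_series; apply: eq_eseriesr => k _.
  by rewrite indicE mem_setE.
rewrite integral_nneseries //.
by apply: eq_eseriesr => k _; rewrite integral_indic // setIT.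
by move=> k; apply/measurable_EFinP; exact: measurable_indic.
Qed.

End Exp.

Section Ser.
Context {R : realType}.

Lemma psum_le_series (a : nat -> R) N : (forall k, 0 <= a k)%R ->
  (\sum_(0 <= k < N) a k)%:E <= \sum_(k <oo) (a k)%:E.
Proof.
move=> a0; rewrite -sumEFin; apply: nneseries_lim_ge => k _ _; rewrite lee_fin.
exact: a0.
Qed.

Lemma series_unbounded (a : nat -> R) : (forall k, 0 <= a k)%R ->
  \sum_(k <oo) (a k)%:E = +oo -> forall A : R, exists N, (A <= \sum_(0 <= k < N) a k)%R.
Proof.
move=> a0 Sinf A; apply: contrapT => H.
have H' N : (\sum_(0 <= k < N) a k <= A)%R.
  by rewrite leNgt; apply/negP => h; apply: H; exists N; exact: ltW.
have : \sum_(k <oo) (a k)%:E <= A%:E.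
  apply: lime_le; first by apply: is_cvg_nneseries => k _ _; rewrite lee_fin.
  by apply: nearW => N; rewrite sumEFin lee_fin.
by rewrite Sinf leye_eq.
Qed.

Lemma series_tail (a : nat -> R) : (forall k, 0 <= a k)%R ->
  \sum_(k <oo) (a k)%:E < +oo -> forall e : R, (0 < e)%R ->
  exists L, forall p q, (L <= p)%N -> (\sum_(p <= k < q) a k <= e)%R.
Proof.
move=> a0 Sfin e e0; apply: contrapT => H.
have H' L : exists p q, (L <= p)%N /\ (e < \sum_(p <= k < q) a k)%R.
  apply: contrapT => h; apply: H; exists L => p q Lp.
  by rewrite leNgt; apply/negP => h2; apply: h; exists p, q.
have big j : exists N, (j%:R * e <= \sum_(0 <= k < N) a k)%R.
  elim: j => [|j [N HN]]; first by exists 0%N; rewrite mul0r big_geq.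
  have [p [q [Np epq]]] := H' N.
  have pq : (p <= q)%N.
    rewrite leqNgt; apply/negP => qp; move: epq; rewrite big_geq ?(ltnW qp) //.
    by rewrite ltNge (ltW e0).
  exists q.
  rewrite (big_cat_nat (n:=p) (leq0n p) pq) /= (big_cat_nat (n:=N) (leq0n N) Np) /=.
  rewrite mulrSr mulrDl mul1r -addrA lerD //.
  rewrite -[X in (X <= _)%R]add0r lerD //; last exact: ltW.
  by apply: sumr_ge0 => k _.
have Sge0 : 0 <= \sum_(k <oo) (a k)%:E by apply: nneseries_ge0 => k _ _; rewrite lee_fin.
have Sfn : \sum_(k <oo) (a k)%:E \is a fin_num by rewrite ge0_fin_numE.
set S := fine (\sum_(k <oo) (a k)%:E).
have S0 : (0 <= S / e)%R by rewrite divr_ge0 ?fine_ge0 // ltW.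
have [N HN] := big (Num.bound (S / e)).
have := @psum_le_series a N a0; rewrite -(fineK Sfn) lee_fin -/S => HS.
have := archi_boundP S0; rewrite ltr_pdivrMr // => HB.
have := le_lt_trans (le_trans HN HS) HB; by rewrite ltxx.
Qed.

End Ser.

Local Close Scope ereal_scope.
Local Close Scope classical_set_scope.

Definition gz (g : bool * nat -> nat) m := g (false, m).
Definition gw (g : bool * nat -> nat) m := g (true, m).
Definition Sg g n := Spos (gz g) (gw g) n.
Definition Fev n hi m (g : bool * nat -> nat) : Prop :=
  m \in Sg g n /\ forall x, (m < x <= hi)%N -> x \notin Sg g n.
Definition sF m n : seq (bool * nat) :=
  [seq (b, k) | b <- [:: false; true], k <- iota m.+1 (n - m)].

Lemma mem_sF m n b k : ((b, k) \in sF m n) = (m < k <= n)%N.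
Proof.
apply/allpairsP/idP => [[[b' k'] [/= _ hk [_ ->]]]|H].
  by move: hk; rewrite mem_iota; lia.
by exists (b, k); split => //=; [by case: b|rewrite mem_iota; lia].
Qed.

Lemma uniq_sF m n : uniq (sF m n).
Proof.
apply: allpairs_uniq => //; first exact: iota_uniq.
by move=> [b k] [b' k'] _ _ /= [-> ->].
Qed.

Lemma Spos_local z w z' w' n m :
  (forall k, (m < k <= n)%N -> z k = z' k /\ w k = w' k) ->
  forall x, (m <= x)%N -> (x \in Spos z w n) = (x \in Spos z' w' n).
Proof. by move=> H; apply: chain_local => k /H [-> ->]. Qed.

Lemma dep_F n hi m : dep_on (sF m n) (Fev n hi m).
Proof.
move=> g h gh [H1 H2].
have E x : (m <= x)%N -> (x \in Sg g n) = (x \in Sg h n).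
  by apply: Spos_local => k kr; rewrite /gz /gw !gh // mem_sF.
split; first by rewrite -E.
move=> x xr; rewrite -E; first exact: H2.
by case/andP: xr => /ltnW.
Qed.

Lemma Jn_local z w z' w' n :
  (forall k, (0 < k <= n)%N -> z k = z' k /\ w k = w' k) ->
  Jn z w n = Jn z' w' n.
Proof.
move=> H; rewrite /Jn; apply: eq_big_nat => m /andP[m1 mn].
rewrite (@Spos_local z w z' w' n 0 H) //; have [-> ->] := H m ltac:(lia). by [].

Qed.

Lemma dep_J n k : dep_on (sF 0 n) (fun g => Jn (gz g) (gw g) n = k).
Proof.
move=> g h gh <-; apply: Jn_local => m mr; rewrite /gz /gw !gh // mem_sF //.
Qed.

Lemma sum_blocks (f : nat -> nat) B L :
  (\sum_(b < B) \sum_(j < L) f (b * L + j) = \sum_(0 <= k < B * L) f k)%N.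
Proof.
elim: B => [|B IH]; first by rewrite big_ord0 big_geq.
rewrite big_ord_recr /= IH mulSnr [RHS](@big_cat_nat _ _ _ (B * L)) ?leq_addr //=.
congr (_ + _)%N.
rewrite -{2}(add0n (B * L)) big_addn.
rewrite (_ : B * L + L - B * L = L)%N; last by lia.
rewrite big_mkord.
by apply: eq_bigr => j _; rewrite addnC.
Qed.

Local Open Scope classical_set_scope.
Local Open Scope ereal_scope.

Definition up k : set nat := [set v | (k <= v)%N].

Section Main.
Context {R : realType} {d : measure_display} {T : measurableType d}
  (P : probability T R) (X : bool * nat -> T -> nat)
  (Xmeas : forall i (k : nat), measurable (X i @^-1` [set k]))
  (Xpos : forall i t, (1 <= X i t)%N)
  (Xindep : mutually_independent P X)
  (Xident : identically_distributed P X).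

Lemma PE A : measurable A -> P A = (fine (P A))%:E.
Proof.
move=> mA; rewrite fineK // ge0_fin_numE // (le_lt_trans (probability_le1 _ mA)) //.
exact: ltry.
Qed.

Lemma fineP01 A : measurable A -> (0 <= fine (P A) <= 1)%R.
Proof.
move=> mA; rewrite fine_ge0 //= -lee_fin -PE //; exact: probability_le1.
Qed.

Definition Q k := P (X (false, 0%N) @^-1` up k).
Definition q k := fine (Q k).

Lemma preim_series i (A : set nat) :
  P (X i @^-1` A) = \sum_(v <oo | v \in A) P (X i @^-1` [set v]).
Proof.
have -> : X i @^-1` A = \bigcup_(v in A) (X i @^-1` [set v]).
  apply/seteqP; split => t /=; first by move=> At; exists (X i t).
  by case=> v Av /= ->.
rewrite measure_bigcup //.
by move=> v w _ _ [t [/= -> ->]].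
Qed.

Lemma Qi i k : P (X i @^-1` up k) = Q k.
Proof.
rewrite /Q !preim_series; apply: eq_eseriesr => v _; exact: Xident.
Qed.

Lemma Qfin k : Q k = (q k)%:E.
Proof. by rewrite /q -PE //; exact: preim_meas. Qed.

Lemma q01 k : (0 <= q k <= 1)%R.
Proof. by apply: fineP01; exact: preim_meas. Qed.

Lemma qdec k k' : (k <= k')%N -> (q k' <= q k)%R.
Proof.
move=> kk; rewrite -lee_fin -!Qfin; apply: le_measure; rewrite ?inE;
  try exact: preim_meas.
by move=> t /=; apply: leq_trans.
Qed.

Definition Wset s k := [set t | (k <= minn (X (false, s) t) (X (true, s) t))%N].

Lemma Wset_rect s k : Wset s k = rect X [:: (false, s); (true, s)] (fun _ => up k).
Proof.
apply/seteqP; split => t; rewrite /Wset /rect /up /=.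
  by rewrite leq_min => /andP[H1 H2] i; rewrite !inE => /orP[]/eqP->.
by move=> H; rewrite leq_min (H (false, s)) ?(H (true, s)) // !inE eqxx ?orbT.
Qed.

Lemma Wmeas s k : measurable (Wset s k).
Proof. rewrite Wset_rect; exact: rect_meas. Qed.

Lemma PW s k : P (Wset s k) = ((q k) ^+ 2)%:E.
Proof.
rewrite Wset_rect Xindep //=.
by rewrite big_cons big_seq1 !Qi Qfin -EFinM expr2.
Qed.


Lemma EZser : \int[P]_t ((X (false, 0%N) t)%:R)%:E = +oo ->
  \sum_(k <oo) (q k.+1)%:E = +oo.
Proof.
rewrite expect_nat // => <-; apply: eq_eseriesr => k _; by rewrite -Qfin.
Qed.

Lemma Eminser : \int[P]_t ((minn (X (false, 0%N) t) (X (true, 0%N) t))%:R)%:E < +oo ->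
  \sum_(k <oo) ((q k.+1) ^+ 2)%:E < +oo.
Proof.
rewrite expect_nat.
  by rewrite (eq_eseriesr (g := fun k => ((q k.+1) ^+ 2)%:E)) // => k _; rewrite -(PW 0).
move=> k.
have us : uniq [:: (false, 0%N); (true, 0%N)] by [].
have dF : dep_on [:: (false, 0%N); (true, 0%N)]
   (fun g => minn (g (false, 0%N)) (g (true, 0%N)) = k).
  by move=> g h gh <-; rewrite !gh // !inE eqxx ?orbT.
exact: (indep_key P X Xmeas Xindep _ us _ dF).1.
Qed.


Local Close Scope ereal_scope.
Lemma block_bound n L b : (1 <= L)%N -> (b * L + L <= n)%N ->
  (forall p r, (L <= p)%N -> (\sum_(p <= k < r) (q k.+1) ^+ 2 <= 2^-1)%R) ->
  (2^-1 <= \sum_(j < L) fine (P (ev X (Fev n (b * L + L) (b * L + j + 1)%N))))%R.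
Proof.
move=> L1 hn tail.
set hi := (b * L + L)%N.
pose Fs (j : nat) := ev X (Fev n hi (b * L + j + 1)%N).
have mF j : measurable (Fs j).
  exact: (indep_key P X Xmeas Xindep _ (uniq_sF _ _) _ (dep_F n hi (b * L + j + 1)%N)).1.
pose Ws (i : nat) := Wset (hi + 1 + i) (L + 1 + i).
pose G k := if (k < L)%N then Fs k else Ws (k - L).
have mG k : measurable (G k) by rewrite /G; case: ifP => _ //; exact: Wmeas.
have cover : setT `<=` \big[setU/set0]_(k < L + (n - hi)) G k.
  move=> t _; rewrite -bigcup_mkord.
  pose f m := minn (X (false, m) t) (X (true, m) t).
  have f1 k : (1 <= f k)%N by rewrite leq_min !Xpos.
  case: (pselect (exists x, (b * L + 1 <= x <= hi)%N && (x \in chain f n n))).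
    move=> exx.
    have ub x : (b * L + 1 <= x <= hi)%N && (x \in chain f n n) -> (x <= hi)%N.
      by case/andP => /andP[].
    case: (ex_maxnP exx ub) => m /andP[/andP[lm mh] mS] mmax.
    exists (m - (b * L + 1))%N; first by rewrite /=; lia.
    rewrite /G ifT; last by lia.
    rewrite /Fs /ev /Fev.
    have -> : (b * L + (m - (b * L + 1)) + 1 = m)%N by lia.
    split => // x /andP[mx xh]; apply/negP => xS.
    have := mmax x; rewrite xh xS andbT.
    have -> : (b * L + 1 <= x)%N by lia.
    by move=> /(_ isT); lia.
  move=> nohit.
  have H x : (b * L + 1 <= x <= hi)%N -> x \notin chain f n n.
    by move=> xH; apply/negP => xS; apply: nohit; exists x; rewrite xH xS.
  have hin : (hi < n)%N.
    case: (ltnP hi n) => // nh; exfalso.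
    have := H n; rewrite chain_head; last by lia.
    by move=> /(_ ltac:(lia)).
  have [s [s1 s2]] := @chain_window f n n (b * L + 1) hi f1 (ltac:(lia) : (1 <= b * L + 1)%N) (leqnn n) hin H.
  exists (L + (s - hi - 1))%N; first by rewrite /=; lia.
  rewrite /G ifF; last by lia.
  rewrite /Ws /Wset /=.
  have -> : (hi + 1 + (L + (s - hi - 1) - L) = s)%N by lia.
  rewrite /f in s2; lia.
have := @content_subadditive _ _ _ P setT G (L + (n - hi)) (fun k _ => mG k) measurableT cover.
move=> H0.
have : (1 <= \sum_(k < L + (n - hi)) P (G k))%E.
  apply: le_trans H0; rewrite -[X in (X <= _)%E](probability_setT P); exact: lexx.
rewrite big_split_ord /=.
rewrite (eq_bigr (fun i : 'I_L => (fine (P (Fs i)))%:E)); last first.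
  by move=> i _; rewrite /G /= ltn_ord -PE.
rewrite (eq_bigr (fun i : 'I_(n - hi) => ((q (L + 1 + i)) ^+ 2)%:E)); last first.
  move=> i _; rewrite /G /= ifF; last by lia.
  by rewrite /Ws -(PW (hi + 1 + (L + i - L))); congr (P (Wset _ _)); lia.
rewrite !sumEFin -EFinD lee_fin => H.
suff : (\sum_(i < n - hi) q (L + 1 + i) ^+ 2 <= 2^-1)%R.
  by move=> H2; rewrite /Fs in H; lra.
rewrite -(big_mkord xpredT (fun i => (q (L + 1 + i) ^+ 2)%R)).
have := tail L (L + (n - hi)) (leqnn L).
rewrite -{1}(add0n L) big_addn (_ : (L + (n - hi) - L = n - hi)%N); last by lia.
congr (_ <= _)%R; apply: eq_bigr => i _; congr (q _ ^+ 2)%R; lia.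
Qed.


Definition Gset n L b j :=
  ev X (Fev n (b * L + L) (b * L + j + 1)) `&`
  rect X [:: (false, (b * L + j + 1)%N)] (fun _ => up (b * L + L)).

Lemma Gmeas n L b j : measurable (Gset n L b j).
Proof.
apply: measurableI; last exact: rect_meas.
exact: (indep_key P X Xmeas Xindep _ (uniq_sF (b * L + j + 1) n) _ (dep_F n (b * L + L) (b * L + j + 1))).1.
Qed.

Lemma PG n L b j :
  P (Gset n L b j) = ((fine (P (ev X (Fev n (b * L + L) (b * L + j + 1)))) *
                       q (b * L + L))%R)%:E.
Proof.
rewrite /Gset (indep_key P X Xmeas Xindep _ (uniq_sF _ _) _ (dep_F n _ _)).2 //.
- have mE : measurable (ev X (Fev n (b * L + L) (b * L + j + 1))).
    exact: (indep_key P X Xmeas Xindep _ (uniq_sF _ _) _ (dep_F n _ _)).1.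
  rewrite big_seq1 Qi Qfin EFinM; congr (_ * _)%E; exact: PE mE.
- by move=> i; rewrite inE => /eqP ->; rewrite mem_sF ltnn.
Qed.

Lemma Jn_lb n L B t : (B * L <= n)%N ->
  (\sum_(b < B) \sum_(j < L) (t \in Gset n L b j : nat) <=
   Jn (fun m => X (false, m) t) (fun m => X (true, m) t) n)%N.
Proof.
move=> BLn.
set z := fun m => X (false, m) t; set w := fun m => X (true, m) t.
pose c m := ((m \in Spos z w n) && (m <= maxn (z m) (w m)))%N.
apply: (@leq_trans (\sum_(b < B) \sum_(j < L) c (b * L + j).+1)).
  apply: leq_sum => b _; apply: leq_sum => j _.
  case: (boolP (t \in Gset n L b j)) => //.
  rewrite inE => -[[H1 _] H2]; rewrite /c addn1 in H1 *.
  have := H2 (false, (b * L + j).+1); rewrite addn1 mem_head => /(_ isT) H3.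
  have -> : ((b * L + j).+1 \in Spos z w n) = true by exact: H1.
  rewrite lt0b /= leq_max; apply/orP; left; rewrite /z.
  apply: leq_trans H3; rewrite /up /= -addnS leq_add2l; exact: ltn_ord.
rewrite (sum_blocks (fun k => c k.+1)) /Jn -/c.
rewrite -(big_add1 0 addn 0 (B * L).+1 xpredT c) /=.
rewrite [X in (_ <= X)%N](@big_cat_nat _ _ _ (B * L).+1) //=.
exact: leq_addr.
Qed.


Local Open Scope ereal_scope.

Lemma EJ_lb n L B : (1 <= L)%N -> (B * L <= n)%N ->
  (forall p r, (L <= p)%N -> (\sum_(p <= k < r) (q k.+1) ^+ 2 <= 2^-1)%R) ->
  (\sum_(b < B) (q (b * L + L) / 2))%R%:E <=
  \int[P]_t ((Jn (fun m => X (false, m) t) (fun m => X (true, m) t) n)%:R)%:E.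
Proof.
move=> L1 BLn tail.
pose h t := \sum_(b < B) \sum_(j < L) ((\1_(Gset n L b j) t : R))%:E.
have mh1 b : measurable_fun setT (fun t => \sum_(j < L) ((\1_(Gset n L b j) t : R))%:E).
  apply: emeasurable_sum => j; apply/measurable_EFinP; apply: measurable_indic.
  exact: Gmeas.
have mh : measurable_fun setT h by apply: emeasurable_sum => b; exact: mh1.
have mJ : measurable_fun setT
    (fun t => ((Jn (fun m => X (false, m) t) (fun m => X (true, m) t) n)%:R : R)%:E).
  apply: fib_mfun => k.
  exact: (indep_key P X Xmeas Xindep _ (uniq_sF 0 n) _ (dep_J n k)).1.
have h0 t : setT t -> 0 <= h t.
  by move=> _; apply: sume_ge0 => b _; apply: sume_ge0 => j _; rewrite lee_fin.
have hle t : setT t -> h t <= ((Jn (fun m => X (false, m) t) (fun m => X (true, m) t) n)%:R : R)%:E.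
  move=> _; rewrite /h.
  under eq_bigr do under eq_bigr do rewrite indicE.
  under eq_bigr do rewrite sumEFin -natr_sum.
  rewrite sumEFin -natr_sum lee_fin ler_nat; exact: Jn_lb.
apply: (le_trans _ (ge0_le_integral P measurableT h0 mh mJ hle)).
rewrite /h ge0_integral_sum //; last first.
  by move=> b t _; apply: sume_ge0 => j _; rewrite lee_fin.
rewrite -sumEFin; apply: lee_sum => b _.
rewrite ge0_integral_sum //; first last.
  all: try (by move=> j t _; rewrite lee_fin).
  all: try (by move=> j; apply/measurable_EFinP; apply: measurable_indic; exact: Gmeas).
rewrite (eq_bigr (fun j : 'I_L => ((fine (P (ev X (Fev n (b * L + L) (b * L + j + 1)%N))) *
                       q (b * L + L)%N)%R)%:E)); last first.
  move=> j _; rewrite integral_indic ?setIT; [exact: PG|exact: measurableT|exact: Gmeas].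
rewrite sumEFin lee_fin -mulr_suml.
have hb : (b * L + L <= n)%N.
  apply: leq_trans BLn; rewrite -mulSnr leq_mul2r ltn_ord orbT //.
have := @block_bound n L b L1 hb tail.
have := q01 (b * L + L) => /andP[q0 q1].
move=> H; nra.
Qed.


Local Close Scope ereal_scope.
Lemma block_compare L B : (\sum_(0 <= k < B.+1 * L) q k.+1 <=
  L%:R + L%:R * \sum_(b < B) q (b * L + L))%R.
Proof.
elim: B => [|B IH].
  rewrite big_ord0 mulr0 addr0 mul1n.
  have H : (\sum_(0 <= k < L) q k.+1 <= \sum_(0 <= k < L) (1 : R))%R.
    by apply: ler_sum => k _; have /andP[_ ->] := q01 k.+1.
  by rewrite sumr_const_nat subn0 in H.
rewrite (@big_cat_nat _ _ _ (B.+1 * L)) //=; last by rewrite leq_mul2r leqnSn orbT.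
rewrite big_ord_recr /= mulrDr addrA lerD //.
have H : (\sum_(B.+1 * L <= k < B.+2 * L) q k.+1 <=
    \sum_(B.+1 * L <= k < B.+2 * L) q (B * L + L))%R.
  apply: ler_sum_nat => k /andP[k1 _]; apply: qdec.
  by rewrite -mulSnr; apply: (leq_trans k1).
apply: (le_trans H).
rewrite sumr_const_nat (_ : (B.+2 * L - B.+1 * L = L)%N); last by rewrite mulSnr addKn.
by rewrite mulr_natl.
Qed.

Lemma sum_mono (f : nat -> R) B0 B : (forall b, 0 <= f b)%R -> (B0 <= B)%N ->
  (\sum_(b < B0) f b <= \sum_(b < B) f b)%R.
Proof.
move=> f0 le; rewrite -!(big_mkord xpredT) (@big_cat_nat _ _ _ B0 0 B) //=.
by rewrite lerDl; apply: sumr_ge0 => b _.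
Qed.

Local Open Scope ereal_scope.
Lemma main_sec
  (EZ : \int[P]_t ((X (false, 0%N) t)%:R)%:E = +oo)
  (Emin : \int[P]_t ((minn (X (false, 0%N) t) (X (true, 0%N) t))%:R)%:E < +oo) :
  (fun n : nat => \int[P]_t
      ((Jn (fun m => X (false, m) t) (fun m => X (true, m) t) n)%:R)%:E)
    @ \oo --> +oo.
Proof.
have a0 k : (0 <= q k.+1 ^+ 2)%R by apply: sqr_ge0.
have b0 k : (0 <= q k)%R by have /andP[] := q01 k.
have [L0 HL0] := @series_tail _ (fun k => (q k.+1 ^+ 2)%R) a0 (Eminser Emin) 2^-1 (ltac:(by rewrite invr_gt0 ltr0n) : (0 < 2^-1 :> R)%R).
pose L := L0.+1.
have L1 : (1 <= L)%N by [].
have tail p r : (L <= p)%N -> (\sum_(p <= k < r) (q k.+1) ^+ 2 <= 2^-1)%R.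
  by move=> Lp; apply: HL0; apply: leq_trans Lp.
apply/cvgeyPge => A.
have [N HN] := @series_unbounded _ (fun k => q k.+1) (fun k => b0 k.+1) (EZser EZ) (L%:R + L%:R * (2 * A)).
have RB0 : (2 * A <= \sum_(b < N) q (b * L + L))%R.
  have H1 : (\sum_(0 <= k < N) q k.+1 <= \sum_(0 <= k < N.+1 * L) q k.+1)%R.
    rewrite (@big_cat_nat _ _ _ N 0 (N.+1 * L)) //=; last first.
      by rewrite mulSn; apply: leq_trans (leq_pmulr N L1) (leq_addl _ _).
    by rewrite lerDl; apply: sumr_ge0 => k _.
  have := le_trans HN (le_trans H1 (block_compare L N)).
  rewrite lerD2l => H2.
  have Lp : (0 < L%:R :> R)%R by rewrite ltr0n.
  by rewrite -(ler_pM2l Lp).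
exists (N * L)%N => // n /= Hn.
have Bn : (N <= n %/ L)%N by rewrite leq_divRL.
apply: le_trans (EJ_lb n L (n %/ L) L1 (leq_trunc_div n L) tail).
rewrite lee_fin -mulr_suml.
have := @sum_mono (fun b => q (b * L + L)) N (n %/ L) (fun b => b0 _) Bn.
move=> H3; have := le_trans RB0 H3; lra.
Qed.

End Main.

Local Open Scope classical_set_scope.
Local Open Scope ereal_scope.

(* X (false, 0) = Z, X (true, 0) = W, X (false, n) = Z_n, X (true, n) = W_n
   for n >= 1. *)
Theorem mainTheorem9 (R : realType) (d : measure_display)
  (T : measurableType d) (P : probability T R)
  (X : bool * nat -> T -> nat)
  (Xmeas : forall i (k : nat), measurable (X i @^-1` [set k]))
  (Xpos : forall i t, (1 <= X i t)%N)
  (Xindep : mutually_independent P X)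
  (Xident : identically_distributed P X)
  (Zaper : aperiodic P (X (false, 0%N)))
  (EZ : \int[P]_t ((X (false, 0%N) t)%:R)%:E = +oo)
  (Emin : \int[P]_t ((minn (X (false, 0%N) t) (X (true, 0%N) t))%:R)%:E < +oo) :
  (fun n : nat => \int[P]_t
      ((Jn (fun m => X (false, m) t) (fun m => X (true, m) t) n)%:R)%:E)
    @ \oo --> +oo.
Proof.
apply: main_sec; assumption.
Qed.
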